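(* Let $N=\{1,\ldots,n\}$, let $(L^+,\le)$ be a totally ordered set with bottom $\mathbb{O}$ and top $\mathbb{1}$ equipped with a conjugation $a\mapsto\overline{a}$, let $\Pi:2^N\to L^+$ be a possibility measure and $\mathrm{N}$ its conjugate necessity measure, $\mathrm{N}(A)=\overline{\Pi(N\setminus A)}$, and suppose the elements of $N$ are labeled so that $\Pi(\{1\})\le\cdots\le\Pi(\{n\})$. Then: (i) $m^\Pi(A)=\Pi(\{i\})$ if $A=\{i\}$ for some $i\in N$, and $m^\Pi(A)=\mathbb{O}$ otherwise; (ii) if $\mathbb{O}<\Pi(\{1\})<\cdots<\Pi(\{n\})=\mathbb{1}$, then $m^{\mathrm{N}}(N)=\mathbb{1}$, $m^{\mathrm{N}}(\{i+1,\ldots,n\})=\overline{\Pi(\{i\})}$ for $i\in N$, and $m^{\mathrm{N}}(A)=\mathbb{O}$ for every other $A\subseteq N$; (iii) if $\Pi(\{i\})=\Pi(\{i+1\})$ for some $i$, then $m^{\mathrm{N}}(\{i+1,\ldots,n\})=\mathbb{O}$.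
   Context: A conjugation on $L^+$ is a bijective order-reversing map $a\mapsto\overline{a}$ with $\overline{\overline{a}}=a$. A capacity is an isotone map $v:(2^N,\subseteq)\to L^+$ with $v(\emptyset)=\mathbb{O}$, $v(N)=\mathbb{1}$. A possibility measure is a capacity $\Pi$ with $\Pi(A\cup B)=\Pi(A)\vee\Pi(B)$ for all $A,B\subseteq N$. For a capacity $v$, its (ordinal) Möbius transform is $m^v(A)=v(A)$ if $v(A)>v(A\setminus\{k\})$ for all $k\in A$, and $m^v(A)=\mathbb{O}$ otherwise (in particular $m^v(\emptyset)=\mathbb{O}$). *)

(* Defs.v *)
From HB Require Import structures.
From mathcomp Require Import all_boot all_order.
Set Implicit Arguments. Unset Strict Implicit. Unset Printing Implicit Defensive.
Import Order.TTheory.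
Local Open Scope order_scope.

(* Ground set N = {1,...,n} is represented by 'I_n (element i : 'I_n stands
   for the paper's i+1).  L^+ is a totally ordered set with bottom and top:
   T : tbOrderType d, with \bot = O and \top = 1. *)

Section Defs.
Context {d : Order.disp_t} {T : tbOrderType d} {n : nat}.

Definition conjugation (c : T -> T) : Prop :=
  [/\ bijective c, (forall a b : T, a <= b -> c b <= c a) & involutive c].

Definition capacity (v : {set 'I_n} -> T) : Prop :=
  [/\ (forall A B : {set 'I_n}, A \subset B -> v A <= v B),
      v set0 = \bot & v setT = \top].

Definition possibility (P : {set 'I_n} -> T) : Prop :=
  capacity P /\ (forall A B : {set 'I_n}, P (A :|: B) = P A `|` P B).

Definition necessity (c : T -> T) (P : {set 'I_n} -> T) (A : {set 'I_n}) : T :=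
  c (P (~: A)).

Definition moebius (v : {set 'I_n} -> T) (A : {set 'I_n}) : T :=
  if (A != set0) && [forall k in A, v (A :\ k) < v A] then v A else \bot.
End Defs.

(* Main.v *)
Require Import Defs.
From HB Require Import structures.
From mathcomp Require Import all_boot all_order.
Import Order.TTheory.
Local Open Scope order_scope.

Section H.
Context {d : Order.disp_t} {T : tbOrderType d} {n : nat}.
Implicit Types (P : {set 'I_n} -> T).

Lemma Pmono {P} : possibility P -> forall A B : {set 'I_n}, A \subset B -> P A <= P B.
Proof. by case=> -[]. Qed.

Lemma Pjoin {P} : possibility P -> forall A B : {set 'I_n}, P (A :|: B) = P A `|` P B.
Proof. by case. Qed.

Lemma P_le {P x} : possibility P -> forall B : {set 'I_n},
  (forall j, j \in B -> P [set j] <= x) -> P B <= x.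
Proof.
move=> hP B; elim: {B}#|B| {-2}B (erefl #|B|) => [|m IH] B hB hle.
  have -> : B = set0 by apply/eqP; rewrite -cards_eq0 -hB.
  by case: hP => -[_ -> _] _; apply: le0x.
have [j jB] : exists j, j \in B.
  by apply/set0Pn; rewrite -card_gt0 hB.
rewrite -(setD1K jB) (Pjoin hP) leUx hle //=.
apply: IH; first by rewrite (cardsD1 j B) jB add1n in hB; case: hB.
by move=> k; rewrite in_setD1 => /andP[_ /hle].
Qed.

Lemma conj_lt {c : T -> T} : conjugation c -> forall x y, (c x < c y) = (y < x).
Proof.
case=> _ hanti hinv x y.
have inj : injective c by apply: (can_inj hinv).
apply/idP/idP => h.
  rewrite lt_neqAle; apply/andP; split.
    by apply/eqP => e; move: h; rewrite e ltxx.
  by rewrite -[y]hinv -[x]hinv; apply: hanti; apply: ltW.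
rewrite lt_neqAle; apply/andP; split.
  by apply/eqP => /inj e; move: h; rewrite e ltxx.
by apply: hanti; apply: ltW.
Qed.

Lemma conj_bot {c : T -> T} : conjugation c -> c \bot = \top.
Proof.
case=> _ hanti hinv; apply/eqP; rewrite eq_le lex1 /=.
by rewrite -{1}[\top]hinv; apply: hanti; apply: le0x.
Qed.

Lemma conj_top {c : T -> T} : conjugation c -> c \top = \bot.
Proof.
case=> _ hanti hinv; apply/eqP; rewrite eq_le le0x andbT.
by rewrite -{1}[\bot]hinv; apply: hanti; apply: lex1.
Qed.

Lemma moebN {c : T -> T} {P} (A : {set 'I_n}) : conjugation c -> possibility P ->
  moebius (necessity c P) A =
  if (A != set0) && [forall k in A, P (~: A) < P [set k]] then c (P (~: A)) else \bot.
Proof.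
move=> hc hP; rewrite /moebius /necessity.
congr (if _ then _ else _); congr (_ && _).
apply: eq_forallb => k; case kA: (k \in A) => //=.
have -> : ~: (A :\ k) = ~: A :|: [set k].
  apply/setP => x; rewrite !inE negb_and negbK; by case: (x == k); case: (x \in A).
by rewrite (conj_lt hc) (Pjoin hP) ltxU ltxx.
Qed.

End H.

Theorem theorem3 (d : Order.disp_t) (T : tbOrderType d) (n : nat)
    (c : T -> T) (P : {set 'I_n} -> T) :
  conjugation c ->
  possibility P ->
  (forall i j : 'I_n, (i <= j)%N -> P [set i] <= P [set j]) ->
  (* (i) *)
  ((forall i : 'I_n, moebius P [set i] = P [set i]) /\
   (forall A : {set 'I_n}, (forall i : 'I_n, A != [set i]) -> moebius P A = \bot))
  /\
  (* (ii) *)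
  ((forall i : 'I_n, \bot < P [set i]) ->
   (forall i j : 'I_n, (i < j)%N -> P [set i] < P [set j]) ->
   (forall i : 'I_n, i.+1 = n -> P [set i] = \top) ->
   [/\ moebius (necessity c P) setT = \top,
       (forall i : 'I_n,
          moebius (necessity c P) [set j : 'I_n | (i < j)%N] = c (P [set i]))
     & (forall A : {set 'I_n}, A != setT ->
          (forall i : 'I_n, A != [set j : 'I_n | (i < j)%N]) ->
          moebius (necessity c P) A = \bot)])
  /\
  (* (iii) *)
  (forall i i' : 'I_n, val i' = i.+1 -> P [set i] = P [set i'] ->
     moebius (necessity c P) [set j : 'I_n | (i < j)%N] = \bot).
Proof.
move=> hc hP hmon.
have P0 : P set0 = \bot by case: hP => -[].
have PT : P setT = \top by case: hP => -[].
have Psing : forall (B : {set 'I_n}) j, j \in B -> P [set j] <= P B.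
  by move=> B j jB; apply: (Pmono hP); rewrite sub1set.
split; [split|split].
- move=> i; have ne : ([set i] != set0) by apply/set0Pn; exists i; rewrite set11.
  rewrite /moebius ne /=.
  case: ifP => // /negbT; rewrite negb_forall_in => /existsP[k /andP[/set1P ->]].
  rewrite setDv P0 => h; apply/le_anti/andP; split; first exact: le0x.
  by rewrite leNgt.
- move=> A hA; rewrite /moebius.
  case: (eqVneq A set0) => [->|A0]; first by [].
  have /set0Pn[j jA] := A0.
  have [k /andP[kA kj]] : exists k, (k \in A) && (k != j).
    apply/existsP; apply: contraR (hA j) => /existsPn hk.
    apply/eqP/setP => x; rewrite inE; apply/idP/eqP => [xA|->//].
    by move: (hk x); rewrite xA /= negbK => /eqP.
  case/orP: (le_total (P [set k]) (P [set j])) => hkj.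
  + have jAk : j \in A :\ k by rewrite in_setD1 eq_sym kj.
    have e : P A = P (A :\ k) by rewrite -{1}(setD1K kA) (Pjoin hP) join_r //;
      apply: le_trans hkj (Psing _ _ jAk).
    case: ifP => // /andP[_ /forall_inP /(_ _ kA)]; by rewrite e ltxx.
  + have kAj : k \in A :\ j by rewrite in_setD1 kj.
    have e : P A = P (A :\ j) by rewrite -{1}(setD1K jA) (Pjoin hP) join_r //;
      apply: le_trans hkj (Psing _ _ kAj).
    case: ifP => // /andP[_ /forall_inP /(_ _ jA)]; by rewrite e ltxx.
- move=> hpos hstr htop; split.
  + rewrite (moebN _ hc hP) setCT P0.
    case: ifP => [_|/negbT]; first exact: conj_bot.
    rewrite negb_and negbK => /orP[/eqP e|].
      by rewrite -PT -P0 e.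
    rewrite negb_forall_in => /existsP[k /andP[_]]; by rewrite hpos.
  + move=> i; rewrite (moebN _ hc hP).
    have ecomp : P (~: [set j : 'I_n | (i < j)%N]) = P [set i].
      apply/eqP; rewrite eq_le; apply/andP; split.
        apply: P_le => // j; rewrite !inE -leqNgt => /hmon //.
      by apply: Psing; rewrite !inE ltnn.
    rewrite ecomp; case: ifP => // /negbT; rewrite negb_and negbK => /orP[|].
      move=> /eqP e.
      have hi : i.+1 = n.
        apply/eqP; rewrite eqn_leq ltn_ord /=; rewrite leqNgt; apply/negP => lt.
        have : Ordinal lt \in [set j : 'I_n | (i < j)%N] by rewrite inE /=.
        by rewrite e inE.
      by rewrite htop // (conj_top hc).
    rewrite negb_forall_in => /existsP[k /andP[]].
    by rewrite inE => /hstr ->.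
  + move=> A AT hA; rewrite (moebN _ hc hP).
    case: ifP => // /andP[A0 /forall_inP hk].
    have [m0 m0A] : exists m, m \in ~: A.
      by apply/set0Pn; apply: contra AT => /eqP e; apply/eqP; rewrite -(setCK A) e setC0.
    have key : forall k j, k \in A -> j \in ~: A -> (j < k)%N.
      move=> k j kA jA; rewrite ltnNge; apply/negP => /hmon hle.
      move: (hk k kA); rewrite ltNge; move/negP; apply.
      by apply: le_trans hle (Psing _ _ jA).
    case: (@arg_maxnP _ m0 (mem (~: A)) val m0A) => m mA mmax.
    have : A = [set j : 'I_n | (m < j)%N].
      apply/setP => x; rewrite inE; case xA: (x \in A).
        by rewrite (key _ _ xA mA).
      have xC : x \in ~: A by rewrite inE xA.
      by have := mmax x xC => /= h; rewrite ltnNge h.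
    by move/eqP; rewrite (negbTE (hA m)).
- move=> i i' hi' heq; rewrite (moebN _ hc hP).
  case: ifP => // /andP[_ /forall_inP h].
  have i'A : i' \in [set j : 'I_n | (i < j)%N] by rewrite inE hi'.
  move: (h _ i'A); rewrite -heq ltNge => /negP; case.
  by apply: Psing; rewrite !inE ltnn.
Qed.
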